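(* Let $m,n$ be monitors with $m\simeq n$, and suppose $m$ is in open reduced normal form. Assume that for some $s\in\mathit{Act}^*$ and variable $x$, $m\xrightarrow{s}m''$ for some $m''$ having $x$ as a summand, and that for no proper prefix $s_p$ of $s$ does $m\xrightarrow{s_p}$ a term having $x$ as a summand. Then $n\xrightarrow{s}n''$ for some $n''$ having $x$ as a summand.
   Context: Monitors: terms $m,n ::= v \mid a.m \mid m+n \mid x$ over a nonempty action set $\mathit{Act}$ and variables $x$, verdicts $v::=\mathit{end}\mid\mathit{yes}\mid\mathit{no}$; closed monitors contain no variables. Terms are considered modulo $x+y=y+x$, $x+(y+z)=(x+y)+z$, $x+x=x$, $x+\mathit{end}=x$; a term $t$ has $x$ as a summand if $t=x+t'$ modulo these laws for some $t'$; $\sum_{i\in I}m_i$ is $\mathit{end}$ for $I=\emptyset$; $v$-free means no occurrence of $v$. Transitions $\xrightarrow{\alpha}$, $\alpha\in\mathit{Act}\cup\{\tau\}$: least relation with $a.m\xrightarrow{a}m$; $m\xrightarrow{\alpha}m'$ implies $m+n\xrightarrow{\alpha}m'$ and $n+m\xrightarrow{\alpha}m'$; $v\xrightarrow{\alpha}v$ for each verdict $v$ (variables have no transitions); for $s=a_1\dots a_k$, $m\xrightarrow{s}m'$ means $m=m_0\xrightarrow{a_1}m_1\cdots\xrightarrow{a_k}m_k=m'$. Weak transitions: $m\xRightarrow{\varepsilon}m'$ iff $m(\xrightarrow{\tau})^*m'$; $m\xRightarrow{a}m'$ iff $m\xRightarrow{\varepsilon}\xrightarrow{a}\xRightarrow{\varepsilon}m'$;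 $m\xRightarrow{as'}m'$ ($s'\ne\varepsilon$) iff $m\xRightarrow{a}m_1\xRightarrow{s'}m'$. For closed $m$, $L_a(m)=\{s\mid m\xRightarrow{s}\mathit{yes}\}$, $L_r(m)=\{s\mid m\xRightarrow{s}\mathit{no}\}$; $m\simeq n$ for closed terms iff $L_a$ and $L_r$ coincide, and for open terms iff $\sigma(m)\simeq\sigma(n)$ for every closed substitution $\sigma$. An open reduced normal form is a term $m=\sum_{a\in A}a.m_a+\sum_{i\in I}x_i\ [+\mathit{yes}]\ [+\mathit{no}]$ with $A\subseteq\mathit{Act}$ finite (one summand per $a$), $\{x_i\}_{i\in I}$ a finite set of variables, each $m_a$ different from $\mathit{end}$ and itself an open reduced normal form, such that: if $v\in\{\mathit{yes},\mathit{no}\}$ is a summand then each $m_a$ is $v$-free; if both $\mathit{yes}$ and $\mathit{no}$ are summands then $m=\mathit{yes}+\mathit{no}$; if $\mathit{yes}$ is a summand and $m\xrightarrow{s}\mathit{no}+m'$ then $m'=\mathit{end}$; if $\mathit{no}$ is a summand and $m\xrightarrow{s}\mathit{yes}+m'$ then $m'=\mathit{end}$. *)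

(* Defs.v *)
From Stdlib Require Import List.
Import ListNotations.
Set Implicit Arguments.

Inductive verdict := VEnd | VYes | VNo.

Section Monitors.
Variables (Act Var : Type).

Inductive term :=
| TV : verdict -> term
| TPre : Act -> term -> term
| TPlus : term -> term -> term
| TVar : Var -> term.

Definition End := TV VEnd.
Definition Yes := TV VYes.
Definition No := TV VNo.

Inductive eqm : term -> term -> Prop :=
| eqm_refl t : eqm t t
| eqm_sym t u : eqm t u -> eqm u t
| eqm_trans t u w : eqm t u -> eqm u w -> eqm t w
| eqm_comm t u : eqm (TPlus t u) (TPlus u t)
| eqm_assoc t u w : eqm (TPlus t (TPlus u w)) (TPlus (TPlus t u) w)
| eqm_idem t : eqm (TPlus t t) t
| eqm_unit t : eqm (TPlus t End) t
| eqm_pre a t u : eqm t u -> eqm (TPre a t) (TPre a u)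
| eqm_plus t t' u u' : eqm t t' -> eqm u u' -> eqm (TPlus t u) (TPlus t' u').

Definition has_summand (x : Var) (t : term) : Prop :=
  exists t', eqm t (TPlus (TVar x) t').

Fixpoint occurs (v : verdict) (t : term) : Prop :=
  match t with
  | TV w => w = v
  | TPre _ t => occurs v t
  | TPlus t u => occurs v t \/ occurs v u
  | TVar _ => False
  end.

Definition vfree (v : verdict) (t : term) : Prop := ~ occurs v t.

Fixpoint closed (t : term) : Prop :=
  match t with
  | TV _ => True
  | TPre _ t => closed t
  | TPlus t u => closed t /\ closed u
  | TVar _ => False
  end.

Fixpoint subst (sigma : Var -> term) (t : term) : term :=
  match t with
  | TV v => TV v
  | TPre a t => TPre a (subst sigma t)
  | TPlus t u => TPlus (subst sigma t) (subst sigma u)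
  | TVar x => sigma x
  end.

(* single transitions; None is tau *)
Inductive step : term -> option Act -> term -> Prop :=
| step_pre a t : step (TPre a t) (Some a) t
| step_plusL t u al t' : step t al t' -> step (TPlus t u) al t'
| step_plusR t u al u' : step u al u' -> step (TPlus t u) al u'
| step_verd v al : step (TV v) al (TV v).

Inductive steps : term -> list Act -> term -> Prop :=
| steps_nil t : steps t [] t
| steps_cons t a t1 s t' : step t (Some a) t1 -> steps t1 s t' -> steps t (a :: s) t'.

Inductive wtau : term -> term -> Prop :=
| wtau_refl t : wtau t t
| wtau_step t t1 t' : step t None t1 -> wtau t1 t' -> wtau t t'.

Fixpoint weak (t : term) (s : list Act) (t' : term) : Prop :=
  match s with
  | [] => wtau t t'
  | a :: s' => exists t1 t2 t3,
      wtau t t1 /\ step t1 (Some a) t2 /\ wtau t2 t3 /\ weak t3 s' t'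
  end.

Definition L_a (t : term) (s : list Act) : Prop := weak t s Yes.
Definition L_r (t : term) (s : list Act) : Prop := weak t s No.

(* equivalence: for closed terms, equal languages; for open terms, equal
   languages under every closed substitution (for closed terms the two
   definitions coincide since substitution is the identity on them). *)
Definition meq (m n : term) : Prop :=
  forall sigma : Var -> term, (forall x, closed (sigma x)) ->
    (forall s, L_a (subst sigma m) s <-> L_a (subst sigma n) s) /\
    (forall s, L_r (subst sigma m) s <-> L_r (subst sigma n) s).

Fixpoint sum_list (l : list term) : term :=
  match l with
  | [] => End
  | t :: l' => TPlus t (sum_list l')
  end.

Definition nf_build (acts : list (Act * term)) (vars : list Var) (byes bno : bool) : term :=
  sum_list (map (fun p => TPre (fst p) (snd p)) acts ++ map TVar vars
            ++ (if byes then [Yes] else []) ++ (if bno then [No] else [])).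

Inductive ornf : term -> Prop :=
| ornf_intro (m : term) (acts : list (Act * term)) (vars : list Var) (byes bno : bool) :
    eqm m (nf_build acts vars byes bno) ->
    NoDup (map fst acts) ->
    (forall p, In p acts -> ornf (snd p) /\ ~ eqm (snd p) End) ->
    (byes = true -> forall p, In p acts -> vfree VYes (snd p)) ->
    (bno = true -> forall p, In p acts -> vfree VNo (snd p)) ->
    (byes = true -> bno = true -> eqm m (TPlus Yes No)) ->
    (byes = true -> forall s t m', s <> [] -> steps m s t -> eqm t (TPlus No m') -> eqm m' End) ->
    (bno = true -> forall s t m', s <> [] -> steps m s t -> eqm t (TPlus Yes m') -> eqm m' End) ->
    ornf m.

End Monitors.

(* Main.v *)
Require Import Defs.
From Stdlib Require Import List.
Import ListNotations.
From Stdlib Require Import Classical ClassicalEpsilon.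

Arguments TV {Act Var} _.
Arguments TVar {Act Var} _.
Arguments End {Act Var}.
Arguments Yes {Act Var}.
Arguments No {Act Var}.

Unset Implicit Arguments.
Section Aux.
Variables (Act Var : Type).
Notation T := (term Act Var).

Inductive pstep : T -> Act -> T -> Prop :=
| ps_pre a t : pstep (TPre a t) a t
| ps_L t u a t' : pstep t a t' -> pstep (TPlus t u) a t'
| ps_R t u a u' : pstep u a u' -> pstep (TPlus t u) a u'.

Inductive psteps : T -> list Act -> T -> Prop :=
| pss_nil t : psteps t [] t
| pss_cons t a t1 s t' : pstep t a t1 -> psteps t1 s t' -> psteps t (a :: s) t'.

Fixpoint tvar (x : Var) (t : T) : Prop :=
  match t with TVar y => y = x | TPlus a b => tvar x a \/ tvar x b | _ => False end.
Fixpoint tverd (v : verdict) (t : T) : Prop :=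
  match t with TV w => w = v | TPlus a b => tverd v a \/ tverd v b | _ => False end.

Lemma eqm_tvar : forall t u : T, eqm t u -> forall x, tvar x t <-> tvar x u.
Proof.
  induction 1; intro y; simpl in *;
  try specialize (IHeqm y); try specialize (IHeqm1 y); try specialize (IHeqm2 y); tauto.
Qed.

Lemma eqm_tverd : forall t u : T, eqm t u -> forall v, v <> VEnd -> (tverd v t <-> tverd v u).
Proof.
  induction 1; intros v Hv; simpl in *;
  try specialize (IHeqm v Hv); try specialize (IHeqm1 v Hv); try specialize (IHeqm2 v Hv);
  try tauto.
  split; [intros [H|H]; [exact H| subst; congruence] | tauto].
Qed.

Lemma eqm_pstep : forall t u : T, eqm t u ->
  (forall a t', pstep t a t' -> exists u', pstep u a u' /\ eqm t' u') /\
  (forall a u', pstep u a u' -> exists t', pstep t a t' /\ eqm t' u').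
Proof.
  induction 1.
  - split; intros; eexists; split; eauto; apply eqm_refl.
  - destruct IHeqm as [H1 H2]; split; intros a t' Hs.
    + destruct (H2 _ _ Hs) as [w1 [Hw Hw1]]. exists w1; split; auto. apply eqm_sym; auto.
    + destruct (H1 _ _ Hs) as [w1 [Hw Hw1]]. exists w1; split; auto. apply eqm_sym; auto.
  - destruct IHeqm1 as [H1 H2]; destruct IHeqm2 as [H3 H4]; split; intros a t' Hs.
    + destruct (H1 _ _ Hs) as [w1 [Hw Hw1]]. destruct (H3 _ _ Hw) as [w2 [Hw2 Hw3]].
      exists w2; split; auto. eapply eqm_trans; eauto.
    + destruct (H4 _ _ Hs) as [w1 [Hw Hw1]]. destruct (H2 _ _ Hw) as [w2 [Hw2 Hw3]].
      exists w2; split; auto. eapply eqm_trans; eauto.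
  - split; intros a t' Hs; inversion Hs; subst; eexists; split;
      try (apply eqm_refl); eauto using ps_L, ps_R.
  - split; intros a t' Hs; inversion Hs; subst.
    + exists t'; split; [apply ps_L, ps_L; auto | apply eqm_refl].
    + inversion H3; subst; exists t'; split; try apply eqm_refl.
      apply ps_L, ps_R; auto. apply ps_R; auto.
    + inversion H3; subst; exists t'; split; try apply eqm_refl.
      apply ps_L; auto. apply ps_R, ps_L; auto.
    + exists t'; split; [apply ps_R, ps_R; auto | apply eqm_refl].
  - split; intros a t' Hs.
    + inversion Hs; subst; exists t'; split; auto; apply eqm_refl.
    + exists t'; split; [apply ps_L; auto | apply eqm_refl].
  - split; intros a t' Hs.
    + inversion Hs; subst. exists t'; split; auto; apply eqm_refl. inversion H3.
    + exists t'; split; [apply ps_L; auto | apply eqm_refl].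
  - split; intros b t' Hs; inversion Hs; subst; eexists; split; try apply ps_pre; auto.
  - destruct IHeqm1 as [H1 H2]; destruct IHeqm2 as [H3 H4];
    split; intros a w Hs; inversion Hs; subst.
    + match goal with Hq : pstep _ _ _ |- _ => destruct (H1 _ _ Hq) as [z [? ?]] end; exists z; split; auto; apply ps_L; auto.
    + match goal with Hq : pstep _ _ _ |- _ => destruct (H3 _ _ Hq) as [z [? ?]] end; exists z; split; auto; apply ps_R; auto.
    + match goal with Hq : pstep _ _ _ |- _ => destruct (H2 _ _ Hq) as [z [? ?]] end; exists z; split; auto; apply ps_L; auto.
    + match goal with Hq : pstep _ _ _ |- _ => destruct (H4 _ _ Hq) as [z [? ?]] end; exists z; split; auto; apply ps_R; auto.
Qed.


Lemma step_cases : forall (t : T) al t', step t al t' ->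
  (exists a, al = Some a /\ pstep t a t') \/ (exists w, t' = TV w /\ tverd w t).
Proof.
  induction 1.
  - left; exists a; split; auto; constructor.
  - destruct IHstep as [[b [? ?]]|[w [? ?]]]; [left; exists b; split; auto; constructor; auto|].
    right; exists w; simpl; auto.
  - destruct IHstep as [[b [? ?]]|[w [? ?]]]; [left; exists b; split; auto; apply ps_R; auto|].
    right; exists w; simpl; auto.
  - right; exists v; simpl; auto.
Qed.

Lemma step_verd : forall w al (t : T), step (TV w) al t -> t = TV w.
Proof. intros; inversion H; auto. Qed.

Lemma steps_verd : forall w s (t : T), steps (TV w) s t -> t = TV w.
Proof.
  intros w s t H; remember (TV w) as u; revert Hequ; induction H; intros; subst; auto.
  apply step_verd in H; subst; auto.
Qed.

Lemma wtau_verd : forall w (t : T), wtau (TV w) t -> t = TV w.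
Proof.
  intros w t H; remember (TV w) as u; revert Hequ; induction H; intros; subst; auto.
  apply step_verd in H; subst; auto.
Qed.

Lemma weak_verd : forall w s (t : T), weak (TV w) s t -> t = TV w.
Proof.
  intros w s; induction s; simpl; intros t H.
  - apply wtau_verd; auto.
  - destruct H as (t1&t2&t3&H1&H2&H3&H4).
    apply wtau_verd in H1; subst. apply step_verd in H2; subst.
    apply wtau_verd in H3; subst. auto.
Qed.

Lemma wtau_cases : forall (t t' : T), wtau t t' -> t' = t \/ exists w, t' = TV w /\ tverd w t.
Proof.
  induction 1; auto.
  destruct (step_cases _ _ _ H) as [[a [Ha _]]|[w [Hw Hw']]]; [discriminate|].
  subst. apply wtau_verd in H0. right; exists w; auto.
Qed.

Lemma steps_psteps : forall (t : T) s r, steps t s r -> psteps t s r \/ exists w, r = TV w.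
Proof.
  induction 1; [left; constructor|].
  destruct (step_cases _ _ _ H) as [[b [Hb Hp]]|[w [Hw _]]].
  - injection Hb; intros; subst. destruct IHsteps as [?|?]; auto. left; econstructor; eauto.
  - subst. apply steps_verd in H0. right; eauto.
Qed.

Lemma pstep_step : forall (t : T) a t', pstep t a t' -> step t (Some a) t'.
Proof. induction 1; [constructor|apply step_plusL|apply step_plusR]; auto. Qed.

Lemma psteps_steps : forall (t : T) s r, psteps t s r -> steps t s r.
Proof. induction 1; econstructor; eauto using pstep_step. Qed.

Definition A (t : T) u v := exists u1 z r, u = u1 ++ z /\ psteps t u1 r /\ tverd v r.

Lemma weak_A : forall u (t : T) v, weak t u (TV v) -> A t u v.
Proof.
  induction u; simpl; intros t v H.
  - destruct (wtau_cases _ _ H) as [H1|[w [H1 H2]]].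
    + subst. exists [], [], (TV v); repeat split; try constructor; simpl; auto.
    + injection H1; intros; subst. exists [], [], t; repeat split; auto; constructor.
  - destruct H as (t1&t2&t3&H1&H2&H3&H4).
    destruct (wtau_cases _ _ H1) as [E|[w [E Hw]]].
    + subst t1. destruct (step_cases _ _ _ H2) as [[b [Hb Hp]]|[w [E Hw]]].
      * injection Hb; intros; subst b.
        destruct (wtau_cases _ _ H3) as [E|[w [E Hw]]].
        -- subst t3. destruct (IHu _ _ H4) as (u1&z&r&?&?&?).
           exists (a :: u1), z, r; subst; repeat split; auto. econstructor; eauto.
        -- subst. apply weak_verd in H4. injection H4; intros; subst.
           exists [a], u, t2; repeat split; auto. econstructor; eauto. constructor.
      * subst. apply wtau_verd in H3; subst. apply weak_verd in H4. injection H4; intros; subst.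
        exists [], (a :: u), t; repeat split; auto; constructor.
    + subst. apply step_verd in H2; subst. apply wtau_verd in H3; subst.
      apply weak_verd in H4. injection H4; intros; subst.
      exists [], (a :: u), t; repeat split; auto; constructor.
Qed.

Lemma tverd_step : forall v (r : T), tverd v r -> forall al, step r al (TV v).
Proof.
  induction r; simpl; intros H al; try contradiction.
  - subst; constructor.
  - destruct H; [apply step_plusL|apply step_plusR]; auto.
Qed.

Lemma weak_self : forall v z, weak (TV v : T) z (TV v).
Proof.
  induction z; simpl. constructor.
  exists (TV v), (TV v), (TV v); split; [constructor| split; [constructor| split; [constructor| auto]]].
Qed.

Lemma weak_tverd : forall v (r : T) z, tverd v r -> weak r z (TV v).
Proof.
  intros v r [|b z] H; simpl.
  - eapply wtau_step; [apply tverd_step; exact H| apply wtau_refl].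
  - exists r, (TV v), (TV v); split; [constructor| split; [apply tverd_step; exact H| split; [constructor| apply weak_self]]].
Qed.

Lemma psteps_weak : forall (t : T) u1 r, psteps t u1 r -> forall z t', weak r z t' -> weak t (u1 ++ z) t'.
Proof.
  induction 1; simpl; intros; auto.
  exists t, t1, t1; split; [constructor| split; [apply pstep_step; auto| split; [constructor| auto]]].
Qed.

Lemma A_weak : forall (t : T) u v, A t u v -> weak t u (TV v).
Proof.
  intros t u v (u1&z&r&?&?&?); subst. eapply psteps_weak; eauto using weak_tverd.
Qed.


Lemma pstep_subst : forall (sg : Var -> T) t a r, pstep t a r -> pstep (subst sg t) a (subst sg r).
Proof. induction 1; simpl; [constructor|apply ps_L|apply ps_R]; auto. Qed.

Lemma psteps_subst : forall (sg : Var -> T) t u r, psteps t u r -> psteps (subst sg t) u (subst sg r).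
Proof. induction 1; econstructor; eauto using pstep_subst. Qed.

Lemma pstep_subst_inv : forall (sg : Var -> T), (forall y, exists w, sg y = TV w) ->
  forall t a r', pstep (subst sg t) a r' -> exists r, pstep t a r /\ r' = subst sg r.
Proof.
  intros sg Hs; induction t; simpl; intros b r' H.
  - inversion H.
  - inversion H; subst. exists t; split; auto; constructor.
  - inversion H; subst.
    + destruct (IHt1 _ _ H4) as [r [? ?]]; exists r; split; auto; apply ps_L; auto.
    + destruct (IHt2 _ _ H4) as [r [? ?]]; exists r; split; auto; apply ps_R; auto.
  - destruct (Hs v) as [w Hw]; rewrite Hw in H; inversion H.
Qed.

Lemma psteps_subst_inv : forall (sg : Var -> T), (forall y, exists w, sg y = TV w) ->
  forall u t r', psteps (subst sg t) u r' -> exists r, psteps t u r /\ r' = subst sg r.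
Proof.
  intros sg Hs; induction u; intros t r' H; inversion H; subst.
  - exists t; split; auto; constructor.
  - destruct (pstep_subst_inv sg Hs _ _ _ H3) as [r1 [? ?]]; subst.
    destruct (IHu _ _ H5) as [r [? ?]]; subst. exists r; split; auto. econstructor; eauto.
Qed.

Lemma tverd_subst_inv : forall (sg : Var -> T) v t, tverd v (subst sg t) ->
  tverd v t \/ exists y, tvar y t /\ tverd v (sg y).
Proof.
  induction t; simpl; intros H; auto.
  - destruct H as [H|H]; [destruct (IHt1 H) as [?|[y [? ?]]]|destruct (IHt2 H) as [?|[y [? ?]]]];
    eauto.
  - right; exists v0; split; [reflexivity|exact H].
Qed.

Lemma tverd_subst : forall (sg : Var -> T) v t, tverd v t -> tverd v (subst sg t).
Proof. induction t; simpl; tauto. Qed.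

Lemma tvar_subst : forall (sg : Var -> T) v y t, tvar y t -> tverd v (sg y) -> tverd v (subst sg t).
Proof. induction t; simpl; intros; try tauto. subst; auto. Qed.

Definition B x (t : T) u := exists u1 z r, u = u1 ++ z /\ psteps t u1 r /\ tvar x r.

Lemma A_subst0 : forall v t u, v <> VEnd -> (A (subst (fun _ => End) t) u v <-> A t u v).
Proof.
  intros v t u Hv; split.
  - intros (u1&z&r'&E&Hp&Ht).
    destruct (psteps_subst_inv (fun _ => End) (fun y => ex_intro _ VEnd eq_refl) _ _ _ Hp)
      as [r [Hr E']]; subst.
    destruct (tverd_subst_inv _ _ _ Ht) as [?|[y [_ Hy]]].
    + exists u1, z, r; auto.
    + simpl in Hy; congruence.
  - intros (u1&z&r&E&Hp&Ht). exists u1, z, (subst (fun _ => End) r); repeat split; auto.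
    apply psteps_subst; auto. apply tverd_subst; auto.
Qed.

Lemma A_substv : forall x v t u, v <> VEnd ->
  (A (subst (fun y => if excluded_middle_informative (y = x) then TV v else End) t) u v
   <-> A t u v \/ B x t u).
Proof.
  intros x v t u Hv.
  set (sg := fun y => if excluded_middle_informative (y = x) then TV v else (End : T)).
  assert (Hs : forall y, exists w, sg y = TV w).
  { intro y; unfold sg; cbv beta; destruct (excluded_middle_informative (y = x)); eexists; reflexivity. }
  split.
  - intros (u1&z&r'&E&Hp&Ht).
    destruct (psteps_subst_inv sg Hs _ _ _ Hp) as [r [Hr E']]; subst.
    destruct (tverd_subst_inv _ _ _ Ht) as [?|[y [Hy1 Hy]]].
    + left; exists u1, z, r; auto.
    + unfold sg in Hy; destruct (excluded_middle_informative (y = x)).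
      * subst; right; exists u1, z, r; auto.
      * simpl in Hy; congruence.
  - intros [(u1&z&r&E&Hp&Ht)|(u1&z&r&E&Hp&Ht)]; exists u1, z, (subst sg r); repeat split; auto;
      try (apply psteps_subst; auto).
    + apply tverd_subst; auto.
    + apply tvar_subst with x; auto. unfold sg; destruct (excluded_middle_informative (x = x)).
      simpl; auto. congruence.
Qed.


Lemma summand_gen : forall (l : T) (P : T -> Prop),
  (forall t, P t -> match t with TPlus _ _ => False | TPre _ _ => False | _ => True end -> t = l) ->
  forall t, (fix f (t : T) : Prop := match t with TPlus a b => f a \/ f b | TPre _ _ => False | _ => P t end) t ->
  exists t', eqm t (TPlus l t').
Proof.
  intros l P HP; induction t; simpl; intros H; try contradiction.
  - rewrite (HP _ H I). exists End. apply eqm_sym, eqm_unit.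
  - destruct H as [H|H].
    + destruct (IHt1 H) as [a' Ha]. exists (TPlus a' t2).
      eapply eqm_trans. apply eqm_plus. exact Ha. apply eqm_refl.
      apply eqm_sym, eqm_assoc.
    + destruct (IHt2 H) as [b' Hb]. exists (TPlus t1 b').
      eapply eqm_trans. apply eqm_plus. apply eqm_refl. exact Hb.
      eapply eqm_trans. apply eqm_assoc.
      eapply eqm_trans. apply eqm_plus. apply eqm_comm. apply eqm_refl.
      apply eqm_sym, eqm_assoc.
  - rewrite (HP _ H I). exists End. apply eqm_sym, eqm_unit.
Qed.

Lemma tverd_summand : forall v (t : T), tverd v t -> exists t', eqm t (TPlus (TV v) t').
Proof.
  intros v t H. apply (summand_gen (TV v) (fun t => tverd v t)).
  - intros [w| | |y]; simpl; intros; try contradiction; subst; auto.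
  - revert H; induction t; simpl; auto. intros [H|H]; [left; apply IHt1|right; apply IHt2]; exact H.
Qed.

Lemma tvar_summand : forall x (t : T), tvar x t -> has_summand x t.
Proof.
  intros x t H. apply (summand_gen (TVar x) (fun t => tvar x t)).
  - intros [w| | |y]; simpl; intros; try contradiction; subst; auto.
  - revert H; induction t; simpl; auto. intros [H|H]; [left; apply IHt1|right; apply IHt2]; exact H.
Qed.

Lemma summand_tvar : forall x (t : T), has_summand x t -> tvar x t.
Proof.
  intros x t [t' H]. apply (proj2 (eqm_tvar _ _ H x)). simpl; auto.
Qed.

Lemma sum_list_pstep : forall (l : list T) a t, pstep (sum_list l) a t -> exists e, In e l /\ pstep e a t.
Proof.
  induction l; simpl; intros b t H; inversion H; subst; eauto.
  destruct (IHl _ _ H4) as [e [? ?]]; eauto.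
Qed.

Lemma sum_list_tverd : forall v (l : list T), tverd v (sum_list l) -> v = VEnd \/ exists e, In e l /\ tverd v e.
Proof.
  induction l; simpl; intros H; auto.
  destruct H as [H|H]; eauto. destruct (IHl H) as [?|[e [? ?]]]; eauto.
Qed.

Lemma nf_pstep : forall acts vars byes bno a (t : T),
  pstep (nf_build acts vars byes bno) a t -> exists p, In p acts /\ fst p = a /\ t = snd p.
Proof.
  unfold nf_build; intros. destruct (sum_list_pstep _ _ _ H) as [e [He Hp]].
  repeat rewrite in_app_iff in He. destruct He as [He|[He|[He|He]]].
  - apply in_map_iff in He. destruct He as [p [E Hp']]; subst. inversion Hp; subst; eauto.
  - apply in_map_iff in He. destruct He as [p [E Hp']]; subst. inversion Hp.
  - destruct byes; simpl in He; [destruct He as [He|[]]|contradiction]; subst; inversion Hp.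
  - destruct bno; simpl in He; [destruct He as [He|[]]|contradiction]; subst; inversion Hp.
Qed.

Lemma nf_tverd : forall acts vars byes bno,
  (tverd VYes (nf_build acts vars byes bno : T) -> byes = true) /\
  (tverd VNo (nf_build acts vars byes bno : T) -> bno = true).
Proof.
  unfold nf_build; split; intros H; destruct (sum_list_tverd _ _ H) as [?|[e [He Hp]]];
    try discriminate;
    repeat rewrite in_app_iff in He; destruct He as [He|[He|[He|He]]];
    try (apply in_map_iff in He; destruct He as [p [E Hp']]; subst; simpl in Hp; contradiction);
    [destruct byes| destruct bno| destruct byes | destruct bno]; simpl in He; auto;
    destruct He as [He|[]]; subst; simpl in Hp; discriminate.
Qed.

Lemma nodup_uniq : forall (acts : list (Act * T)) p p', NoDup (map fst acts) -> In p acts -> In p' acts ->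
  fst p = fst p' -> p = p'.
Proof.
  induction acts; simpl; intros p p' Hn H1 H2 E; [contradiction|].
  inversion Hn; subst.
  destruct H1 as [H1|H1]; destruct H2 as [H2|H2]; subst; auto.
  - exfalso; apply H3. rewrite E. apply in_map; auto.
  - exfalso; apply H3. rewrite <- E. apply in_map; auto.
Qed.

Lemma ornf_pstep : forall (m : T) a m1, ornf m -> pstep m a m1 ->
  exists q, ornf q /\ eqm m1 q /\ (forall m2, pstep m a m2 -> eqm m2 q).
Proof.
  intros m a m1 Ho Hp. destruct Ho as [m acts vars byes bno Heq Hnd Hsub Hy Hn Hyn H7 H8].
  destruct (proj1 (eqm_pstep _ _ Heq) _ _ Hp) as [m1' [Hp' E1]].
  destruct (nf_pstep _ _ _ _ _ _ Hp') as [p [Hin [Hf Hs]]]; subst.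
  exists (snd p); split; [apply (Hsub p Hin)|split; auto].
  intros m2 Hp2.
  destruct (proj1 (eqm_pstep _ _ Heq) _ _ Hp2) as [m2' [Hp2' E2]].
  destruct (nf_pstep _ _ _ _ _ _ Hp2') as [p' [Hin' [Hf' Hs']]]; subst.
  assert (p' = p) by (apply (nodup_uniq acts); auto; congruence). subst; auto.
Qed.

Lemma psteps_eqm : forall (t : T) s r, psteps t s r -> forall u, eqm t u -> exists r', psteps u s r' /\ eqm r r'.
Proof.
  induction 1; intros u E.
  - exists u; split; auto; constructor.
  - destruct (proj1 (eqm_pstep _ _ E) _ _ H) as [u1 [Hu1 E1]].
    destruct (IHpsteps _ E1) as [r' [? ?]]. exists r'; split; auto. econstructor; eauto.
Qed.

Lemma det : forall u (m : T) q1 q2, ornf m -> psteps m u q1 -> psteps m u q2 -> eqm q1 q2.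
Proof.
  induction u; intros m q1 q2 Ho H1 H2; inversion H1; inversion H2; subst.
  - apply eqm_refl.
  - destruct (ornf_pstep _ _ _ Ho H4) as [q [Hq [E1 E2]]].
    destruct (psteps_eqm _ _ _ H6 _ E1) as [r1 [Hr1 F1]].
    destruct (psteps_eqm _ _ _ H12 _ (E2 _ H10)) as [r2 [Hr2 F2]].
    eapply eqm_trans; [exact F1|]. eapply eqm_trans; [|apply eqm_sym; exact F2].
    eapply IHu; eauto.
Qed.

Lemma psteps_app : forall u z (t : T) r, psteps t (u ++ z) r -> exists q, psteps t u q /\ psteps q z r.
Proof.
  induction u; simpl; intros z t r H.
  - exists t; split; auto; constructor.
  - inversion H; subst. destruct (IHu _ _ _ H5) as [q [? ?]]. exists q; split; auto. econstructor; eauto.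
Qed.

Lemma verd_dead : forall x w (q : T) z r, eqm q (TV w) -> psteps q z r -> tvar x r -> False.
Proof.
  intros x w q z r E H Hx. destruct H.
  - apply (proj1 (eqm_tvar _ _ E x)) in Hx. simpl in Hx; auto.
  - destruct (proj1 (eqm_pstep _ _ E) _ _ H) as [u' [Hu _]]. inversion Hu.
Qed.

Lemma side : forall x w (m : T) u z r r2 m', ornf m -> psteps m (u ++ z) r -> tvar x r ->
  psteps m u r2 -> eqm r2 (TPlus (TV w) m') -> eqm m' End -> False.
Proof.
  intros x w m u z r r2 m' Ho H Hx H2 E1 E2.
  destruct (psteps_app _ _ _ _ H) as [q [Hq1 Hq2]].
  pose proof (det _ _ _ _ Ho Hq1 H2) as D.
  apply (verd_dead x w q z r); auto.
  eapply eqm_trans; [exact D|]. eapply eqm_trans; [exact E1|].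
  eapply eqm_trans; [apply eqm_plus; [apply eqm_refl|exact E2]|]. apply eqm_unit.
Qed.


Lemma D5 : forall x s (m r : T), ornf m -> psteps m s r -> tvar x r -> A m s VYes -> A m s VNo -> False.
Proof.
  intros x; induction s as [|a s IH];
    intros m r Ho Hp Hx [u1 [z1 [r1 [E1 [P1 T1]]]]] [u2 [z2 [r2 [E2 [P2 T2]]]]].
  - inversion Hp; subst. symmetry in E1, E2.
    destruct (app_eq_nil _ _ E1); destruct (app_eq_nil _ _ E2); subst.
    inversion P1; inversion P2; subst.
    destruct Ho as [m acts vars byes bno Heq Hnd Hsub Hy Hn Hyn H7 H8].
    assert (byes = true).
    { apply (proj1 (nf_tverd acts vars byes bno)). apply (proj1 (eqm_tverd _ _ Heq VYes ltac:(discriminate))); auto. }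
    assert (bno = true).
    { apply (proj2 (nf_tverd acts vars byes bno)). apply (proj1 (eqm_tverd _ _ Heq VNo ltac:(discriminate))); auto. }
    specialize (Hyn H H0). apply (proj1 (eqm_tvar _ _ Hyn x)) in Hx. unfold Yes, No in Hx; simpl in Hx; tauto.
  - inversion Hp; subst. match goal with H1 : pstep m a ?t, H2 : psteps ?t s r |- _ => rename t into m1; rename H1 into Hm1; rename H2 into Hm1r end.
    pose proof Ho as Ho'.
    destruct Ho' as [m acts vars byes bno Heq Hnd Hsub Hy Hn Hyn H7 H8].
    destruct u1 as [|b1 u1']; destruct u2 as [|b2 u2']; simpl in E1, E2.
    + inversion P1; inversion P2; subst.
      assert (byes = true).
      { apply (proj1 (nf_tverd acts vars byes bno)). apply (proj1 (eqm_tverd _ _ Heq VYes ltac:(discriminate))); auto. }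
      assert (bno = true).
      { apply (proj2 (nf_tverd acts vars byes bno)). apply (proj1 (eqm_tverd _ _ Heq VNo ltac:(discriminate))); auto. }
      specialize (Hyn H H0).
      destruct (proj1 (eqm_pstep _ _ Hyn) _ _ Hm1) as [u' [Hu _]].
      inversion Hu; subst; inversion H5.
    + inversion P1; subst.
      assert (byes = true).
      { apply (proj1 (nf_tverd acts vars byes bno)). apply (proj1 (eqm_tverd _ _ Heq VYes ltac:(discriminate))); auto. }
      destruct (tverd_summand _ _ T2) as [m' Em'].
      assert (Hend : eqm m' End).
      { apply (H7 H (b2 :: u2') r2 m'); auto. discriminate. apply psteps_steps; auto. }
      apply (side x VNo _ (b2 :: u2') z2 r r2 m' Ho); [simpl; rewrite <- E2; exact Hp| exact Hx| exact P2| exact Em'| exact Hend].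
    + inversion P2; subst.
      assert (bno = true).
      { apply (proj2 (nf_tverd acts vars byes bno)). apply (proj1 (eqm_tverd _ _ Heq VNo ltac:(discriminate))); auto. }
      destruct (tverd_summand _ _ T1) as [m' Em'].
      assert (Hend : eqm m' End).
      { apply (H8 H (b1 :: u1') r1 m'); auto. discriminate. apply psteps_steps; auto. }
      apply (side x VYes _ (b1 :: u1') z1 r r1 m' Ho); [simpl; rewrite <- E1; exact Hp| exact Hx| exact P1| exact Em'| exact Hend].
    + injection E1; intros E1' Eb1; injection E2; intros E2' Eb2; subst.
      inversion P1 as [|t0 a0 m1a s0 t0' Hpa Hpar]; subst.
      inversion P2 as [|t9 a9 m1b s9 t9' Hpb Hpbr]; subst.
      destruct (ornf_pstep _ _ _ Ho Hm1) as [q [Hq [Eq Eall]]].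
      destruct (psteps_eqm _ _ _ Hm1r _ Eq) as [r' [Hr' Fr]].
      destruct (psteps_eqm _ _ _ Hpar _ (Eall _ Hpa)) as [r1' [Hr1' F1]].
      destruct (psteps_eqm _ _ _ Hpbr _ (Eall _ Hpb)) as [r2' [Hr2' F2]].
      apply (IH q r'); auto.
      * apply (proj1 (eqm_tvar _ _ Fr x)); auto.
      * exists u1', z1, r1'; repeat split; auto.
        apply (proj1 (eqm_tverd _ _ F1 VYes ltac:(discriminate))); auto.
      * exists u2', z2, r2'; repeat split; auto.
        apply (proj1 (eqm_tverd _ _ F2 VNo ltac:(discriminate))); auto.
Qed.


Lemma meq_A : forall (m n : T) v, meq m n -> (v = VYes \/ v = VNo) ->
  forall sg, (forall y, closed (sg y)) -> forall u, A (subst sg m) u v <-> A (subst sg n) u v.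
Proof.
  intros m n v Hm Hv sg Hc u. destruct (Hm sg Hc) as [Ha Hr].
  split; intro H; apply weak_A; apply A_weak in H;
  destruct Hv; subst; [apply (Ha u)|apply (Hr u)|apply (Ha u)|apply (Hr u)]; exact H.
Qed.

Lemma core : forall (m n : T) x s v,
  (forall u, A m u v <-> A n u v) ->
  (forall u, A m u v \/ B x m u <-> A n u v \/ B x n u) ->
  ~ A m s v -> B x m s ->
  (forall u0 z r, s = u0 ++ z -> z <> [] -> psteps m u0 r -> tvar x r -> False) ->
  exists r, psteps n s r /\ tvar x r.
Proof.
  intros m n x s v H1 H2 HnA HB Hmin.
  destruct (proj1 (H2 s) (or_intror HB)) as [HA|[u1 [z [r [E [Hp Hx]]]]]].
  - exfalso; apply HnA, H1; auto.
  - destruct (proj2 (H2 u1) (or_intror (ex_intro _ u1 (ex_intro _ [] (ex_intro _ r (conj (eq_sym (app_nil_r u1)) (conj Hp Hx)))))))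
      as [[u0 [z0 [r0 [E0 [P0 T0]]]]]|[u0 [z' [r0 [E0 [P0 T0]]]]]].
    + exfalso; apply HnA. exists u0, (z0 ++ z), r0; repeat split; auto.
      subst; rewrite app_assoc; auto.
    + destruct (z' ++ z) eqn:Ez.
      * destruct (app_eq_nil _ _ Ez); subst. rewrite app_nil_r; eauto.
      * exfalso; apply (Hmin u0 (z' ++ z) r0); auto.
        subst; rewrite app_assoc; auto. rewrite Ez; discriminate.
Qed.

End Aux.
Arguments A {Act Var}. Arguments B {Act Var}. Arguments tvar {Act Var}. Arguments tverd {Act Var}. Arguments psteps {Act Var}. Arguments pstep {Act Var}.

Theorem mainTheorem11 (Act Var : Type) (HAct : inhabited Act)
  (m n : term Act Var) :
  meq m n -> ornf m ->
  forall (s : list Act) (x : Var) (m'' : term Act Var),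
    steps m s m'' -> has_summand x m'' ->
    (forall (sp s2 : list Act) (t : term Act Var),
        s = sp ++ s2 -> s2 <> [] -> steps m sp t -> ~ has_summand x t) ->
    exists n'', steps n s n'' /\ has_summand x n''.
Proof.
  intros Hmeq Ho s x m'' Hs Hsum Hmin.
  assert (Hx : tvar x m'') by (apply summand_tvar; auto).
  assert (Hps : psteps m s m'').
  { destruct (steps_psteps _ _ _ _ _ Hs) as [?|[w Hw]]; auto. subst; simpl in Hx; contradiction. }
  assert (HB : B x m s) by (exists s, [], m''; repeat split; auto; rewrite app_nil_r; auto).
  assert (Hmin' : forall u0 z r, s = u0 ++ z -> z <> [] -> psteps m u0 r -> tvar x r -> False).
  { intros u0 z r E Hz Hp Hr. apply (Hmin u0 z r E Hz (psteps_steps _ _ _ _ _ Hp)). apply tvar_summand; auto. }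
  assert (Hv : exists v, (v = VYes \/ v = VNo) /\ ~ A m s v).
  { destruct (classic (A m s VYes)) as [HY|HY].
    - exists VNo; split; auto. intro HN. apply (D5 _ _ x s m m''); auto.
    - exists VYes; split; auto. }
  destruct Hv as [v [Hv HnA]].
  assert (Hne : v <> VEnd) by (destruct Hv; subst; discriminate).
  assert (H1 : forall u, A m u v <-> A n u v).
  { intro u. rewrite <- (A_subst0 _ _ v m u Hne), <- (A_subst0 _ _ v n u Hne).
    apply meq_A; auto. intros; simpl; auto. }
  assert (H2 : forall u, A m u v \/ B x m u <-> A n u v \/ B x n u).
  { intro u. rewrite <- (A_substv _ _ x v m u Hne), <- (A_substv _ _ x v n u Hne).
    apply meq_A; auto. intros y; simpl; destruct (excluded_middle_informative (y = x)); simpl; auto. }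
  destruct (core _ _ m n x s v H1 H2 HnA HB Hmin') as [r [Hr Hrx]].
  exists r; split; [apply psteps_steps; auto| apply tvar_summand; auto].
Qed.
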